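(* For every nonnegative integer $n$, the number of partitions $\lambda$ of $n$ with $\ell(\lambda)+\mu_2(\lambda)$ even minus the number of partitions $\lambda$ of $n$ with $\ell(\lambda)+\mu_2(\lambda)$ odd equals the number of partitions of $n$ into distinct odd parts.
   Context: For a partition $\lambda$, $\ell(\lambda)$ is its number of parts, and $\mu_2(\lambda)$ (the $2$-measure) is the length of the longest subsequence of the parts of $\lambda$ (listed in weakly decreasing order) in which the difference between any two consecutive members of the subsequence is at least $2$. *)

(* Defs.v *)
From mathcomp Require Import all_boot.
Set Implicit Arguments. Unset Strict Implicit. Unset Printing Implicit Defensive.

Definition is_partition (n : nat) (s : seq nat) : bool :=
  [&& sorted geq s, all (fun x => 0 < x) s & sumn s == n].

Fixpoint all_seqs (k m : nat) : seq (seq nat) :=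
  match k with
  | 0 => [:: [::]]
  | k'.+1 => [::] :: [seq x :: t | x <- iota 1 m, t <- all_seqs k' m]
  end.

(* Every partition of n has at most n parts, each at most n, so this lists
   all partitions of n, each exactly once. *)
Definition partitions (n : nat) : seq (seq nat) :=
  [seq s <- all_seqs n n | is_partition n s].

Definition ell (s : seq nat) : nat := size s.

Fixpoint all_masks (k : nat) : seq bitseq :=
  match k with
  | 0 => [:: [::]]
  | k'.+1 => [seq b :: m | b <- [:: false; true], m <- all_masks k']
  end.

Definition mu2 (s : seq nat) : nat :=
  \max_(t <- [seq mask m s | m <- all_masks (size s)]
         | sorted (fun a b => b + 2 <= a) t) size t.

Definition distinct_odd_partition (n : nat) (s : seq nat) : bool :=
  [&& is_partition n s, uniq s & all odd s].

(* Main.v *)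
Require Import Defs.
From HB Require Import structures.
From mathcomp Require Import all_boot all_algebra.
From mathcomp Require boolp.
From mathcomp Require Import zify ring.
Set Implicit Arguments. Unset Strict Implicit. Unset Printing Implicit Defensive.
Import GRing.Theory.

Lemma mem_all_seqs k m s :
  (s \in all_seqs k m) = (size s <= k) && all (fun x => 0 < x <= m) s.
Proof.
elim: k s => [|k IH] [|x s] //=.
rewrite in_cons /= ltnS; apply/allpairsP/idP.
  case=> [[y t]] /= [hy ht [-> ->]]; rewrite mem_iota in hy; rewrite IH in ht; case/andP: ht => -> ->; rewrite andbT; lia.
move=> /and3P [h1 h2 h3]; exists (x, s) => /=; split => //.
  by rewrite mem_iota; lia.
by rewrite IH h1.
Qed.

Lemma uniq_all_seqs k m : uniq (all_seqs k m).
Proof.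
elim: k => [|k IH] //=.
apply/andP; split.
  by apply/allpairsP => -[[y t] /= [_ _]].
apply: allpairs_uniq => //; first exact: iota_uniq.
by move=> [a b] [c d] _ _ /= [-> ->].
Qed.

Lemma mem_partitions n s : (s \in partitions n) = is_partition n s.
Proof.
rewrite /partitions mem_filter; case: (boolP (is_partition n s)) => //= hp.
move: (hp) => /and3P [_ hpos /eqP hs].
rewrite mem_all_seqs; apply/andP; split.
  rewrite -hs; elim: s hpos {hs hp} => //= x s IH /andP [hx hs]; have := IH hs; lia.
apply/allP => x hx; move/allP: hpos => /(_ x hx) -> /=.
rewrite -hs; elim: s hx {hp hs} => //= y s IH; rewrite in_cons => /orP [/eqP ->|h]; first lia.
have := IH h; lia.
Qed.

Lemma uniq_partitions n : uniq (partitions n).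
Proof. exact/filter_uniq/uniq_all_seqs. Qed.

Lemma mem_all_masks k m : (m \in all_masks k) = (size m == k).
Proof.
elim: k m => [|k IH] [|b m] //.
all: rewrite [all_masks _]/= cats0 mem_cat.
  by apply/negP => /orP [] /mapP [? _].
have inj : forall c : bool, injective (cons c) by move=> c a a' [].
case: b; rewrite (mem_map (inj _)) /= eqSS -IH.
  by apply/idP/idP => [/orP [/mapP [m' _ //]|//]|->]; rewrite orbT.
by apply/idP/idP => [/orP [//|/mapP [m' _ //]]|->].
Qed.

Definition sepr := (fun a b : nat => b + 2 <= a).

Lemma mu2E (s : seq nat) : mu2 s = \max_(t <- [seq mask m s | m <- all_masks (size s)] | sorted sepr t) size t.
Proof. by []. Qed.

Lemma mem_masks (s t : seq nat) : (t \in [seq mask m s | m <- all_masks (size s)]) = subseq t s.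
Proof.
apply/mapP/idP.
  by case=> m _ ->; exact: mask_subseq.
case/subseqP=> m hm ->; exists m => //; by rewrite mem_all_masks hm.
Qed.

Lemma mu2_ub (s t : seq nat) : subseq t s -> sorted sepr t -> size t <= mu2 s.
Proof.
move=> hs ht; rewrite mu2E; apply: (@leq_bigmax_seq _ _ _ (fun t => size t) t) => //.
by rewrite mem_masks.
Qed.

Lemma mu2_lub (s : seq nat) k : (forall t, subseq t s -> sorted sepr t -> size t <= k) -> mu2 s <= k.
Proof.
move=> h; rewrite mu2E; apply/bigmax_leqP_seq => t; rewrite mem_masks; exact: h.
Qed.

Lemma bigmax_seq_wit (I : eqType) r (P : pred I) (F : I -> nat) :
  (\max_(i <- r | P i) F i = 0) \/ exists2 i, (i \in r) && P i & F i = \max_(i <- r | P i) F i.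
Proof.
elim: r => [|x r IH]; first by left; rewrite big_nil.
rewrite big_cons; case: ifP => hP; last first.
  case: IH => [e|[i hi e]]; first by left.
  by right; exists i => //; rewrite in_cons; case/andP: hi => -> ->; rewrite orbT.
case: (leqP (\max_(j <- r | P j) F j) (F x)) => hle.
  by right; exists x => //; rewrite in_cons eqxx hP.
case: IH => [e|[i hi e]]; first by rewrite e in hle.
by right; exists i => //; rewrite in_cons; case/andP: hi => -> ->; rewrite orbT.
Qed.

Lemma mu2_wit (s : seq nat) : exists t, [/\ subseq t s, sorted sepr t & size t = mu2 s].
Proof.
case: (bigmax_seq_wit [seq mask m s | m <- all_masks (size s)] (sorted sepr) (fun t => size t)).
  by move=> e; exists [::]; rewrite mu2E e (@sub0seq nat).
case=> t /andP [ht hs] e; exists t; split => //; by rewrite -mem_masks.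
Qed.

Lemma sepr_trans : transitive sepr.
Proof. rewrite /sepr => a b c; lia. Qed.

Lemma mu2_rcons (l : seq nat) x : all (fun y => x <= y) l ->
  mu2 (rcons l x) = (mu2 [seq y <- l | x.+2 <= y]).+1.
Proof.
move=> hl; apply/eqP; rewrite eqn_leq; apply/andP; split.
  apply: mu2_lub => t ht hst.
  have e : [seq y <- rcons l x | x.+2 <= y] = [seq y <- l | x.+2 <= y].
    by rewrite filter_rcons ifF //; apply/negbTE; rewrite -ltnNge; lia.
  have hf : subseq [seq y <- t | x.+2 <= y] [seq y <- l | x.+2 <= y].
    rewrite -e subseq_filter filter_all /=.
    exact: subseq_trans (filter_subseq _ _) ht.
  have hsf : sorted sepr [seq y <- t | x.+2 <= y] by apply: sorted_filter => //; exact: sepr_trans.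
  have h1 := mu2_ub hf hsf.
  have hall : all (fun y => x <= y) t.
    apply/allP => y hy; have : y \in rcons l x by exact: (mem_subseq ht).
    by rewrite mem_rcons in_cons => /orP [/eqP ->|/(allP hl)].
  have hc : count (fun y => ~~ (x.+2 <= y)) t <= 1.
    move: hst hall; rewrite (sorted_pairwise sepr_trans).
    elim: t {ht hf hsf h1} => //= a t IH /andP [ha hp] /andP [hxa hall].
    case: (leqP x.+2 a) => hxa2 /=.
      by rewrite add0n; apply: IH.
    have -> : count (fun y => ~~ (x.+2 <= y)) t = 0.
      apply/eqP; rewrite -leqn0 leqNgt -has_count; apply/hasPn => y hy; rewrite negbK.
      move/allP: ha => /(_ y hy); rewrite /sepr; move/allP: hall => /(_ y hy); lia.
    by [].
  have := count_predC (fun y => x.+2 <= y) t; rewrite -size_filter.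
  have -> : count (predC (fun y => x.+2 <= y)) t = count (fun y => ~~ (x.+2 <= y)) t by [].
  move=> <-; apply: leq_trans (leq_add h1 hc) _; by rewrite addn1.
case: (mu2_wit [seq y <- l | x.+2 <= y]) => t [ht hst <-].
have -> : (size t).+1 = size (rcons t x) by rewrite size_rcons.
apply: mu2_ub.
  rewrite -!cats1 subseq_cat2r; exact: subseq_trans ht (filter_subseq _ _).
rewrite (sorted_pairwise sepr_trans) -cats1 pairwise_cat /= andbT.
rewrite -(sorted_pairwise sepr_trans) hst andbT.
apply/allP => y hy /=; rewrite andbT /sepr.
have : y \in [seq y <- l | x.+2 <= y] by exact: (mem_subseq ht).
rewrite mem_filter => /andP [h _]; lia.
Qed.

Lemma geq_trans : transitive (@geq).
Proof. move=> a b c /=; lia. Qed.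

Lemma sorted_rcons_geq (s : seq nat) x :
  sorted geq (rcons s x) = sorted geq s && all (fun y => x <= y) s.
Proof.
rewrite !(sorted_pairwise geq_trans) -cats1 pairwise_cat /= andbT andbC.
congr (_ && _); rewrite /allrel; apply: eq_all => y /=; by rewrite andbT.
Qed.

Lemma is_partition_rcons n (s : seq nat) x : 0 < x -> x <= n ->
  is_partition n (rcons s x) && all (fun y => x <= y) (rcons s x) =
  is_partition (n - x) s && all (fun y => x <= y) s.
Proof.
move=> x0 xn; rewrite /is_partition sorted_rcons_geq all_rcons all_rcons sumn_rcons x0 leqnn /=.
case hs: (all (fun y => x <= y) s); rewrite ?andbF ?andbT //.
have -> : all (fun y => 0 < y) s by apply/allP => y hy; move/allP: hs => /(_ y hy); lia.
by rewrite /=; apply/idP/idP => /eqP h; apply/eqP; lia.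
Qed.

Lemma min_last (t : seq nat) x : sorted geq t -> all (fun y => x <= y) t -> x \in t ->
  exists s, t = rcons s x.
Proof.
case/lastP: t => [//|s y]; rewrite sorted_rcons_geq all_rcons mem_rcons in_cons.
case/andP => _ hs /andP [hxy hx] /orP [/eqP e|hin]; first by exists s; rewrite e.
move/allP: hs => /(_ x hin) h; have e : x = y by lia.
by exists s; rewrite e.
Qed.

Lemma big_rconsP n x (P : pred (seq nat)) (F : seq nat -> int) : 0 < x -> x <= n ->
  (\sum_(s <- partitions n | [&& all (fun y => x <= y)%N s, x \in s & P s]) F s =
  \sum_(s <- partitions (n - x) | all (fun y => x <= y)%N s && P (rcons s x)) F (rcons s x))%R.
Proof.
move=> x0 xn.
rewrite -big_filter -[RHS]big_filter.
rewrite -(big_map (rcons^~ x) xpredT F).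
apply: perm_big; apply: uniq_perm.
- exact/filter_uniq/uniq_partitions.
- rewrite map_inj_uniq; [exact/filter_uniq/uniq_partitions | exact: rcons_injl].
move=> t; rewrite mem_filter mem_partitions; apply/idP/mapP.
  case/andP => /and3P [ha hx hP] hp.
  have [s e] : exists s, t = rcons s x.
    by apply: min_last => //; move: hp; rewrite /is_partition => /and3P [].
  exists s => //; rewrite mem_filter mem_partitions -e hP andbT.
  have := is_partition_rcons s x0 xn; rewrite -e hp ha /= => /esym /andP [-> ->] //.
case=> s; rewrite mem_filter mem_partitions => /andP [/andP [ha hP] hp] ->.
have := is_partition_rcons s x0 xn; rewrite hp ha /= => /andP [-> ->].
by rewrite hP mem_rcons mem_head.
Qed.

Definition sg (s : seq nat) : int := ((-1) ^+ (size s + mu2 s))%R.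

Definition cnt m H n : int :=
  (\sum_(s <- partitions n | all (fun y => H <= y)%N s && (mu2 s == m)) sg s)%R.
Definition Ecnt m H n : int :=
  (\sum_(s <- partitions n | [&& all (fun y => H <= y)%N s, H \in s & mu2 s == m]) sg s)%R.
Definition Gcnt m H n : int :=
  (\sum_(s <- partitions n | all (fun y => H.+1 <= y)%N s && (mu2 (rcons s H) == m))
      sg (rcons s H))%R.

Lemma all_geS H (s : seq nat) :
  all (fun y => H <= y) s && (H \notin s) = all (fun y => H.+1 <= y) s.
Proof.
elim: s => //= y s IH; rewrite in_cons negb_or -IH.
by case: (ltngtP H y) => h /=; rewrite ?andbF.
Qed.

Lemma cnt_split m H n : cnt m H n = (cnt m H.+1 n + Ecnt m H n)%R.
Proof.
rewrite /cnt /Ecnt (bigID (fun s => H \in s)) /= addrC; congr (_ + _)%R.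
  apply: eq_bigl => s; rewrite -all_geS.
  by case: (all _ _) (H \in s) (mu2 s == m) => [] [] [].
by apply: eq_bigl => s; case: (all _ _) (H \in s) (mu2 s == m) => [] [] [].
Qed.


Lemma eq_big_part n (P1 P2 : pred (seq nat)) (F1 F2 : seq nat -> int) :
  (forall s, is_partition n s -> P1 s = P2 s) ->
  (forall s, is_partition n s -> P1 s -> F1 s = F2 s) ->
  (\sum_(s <- partitions n | P1 s) F1 s = \sum_(s <- partitions n | P2 s) F2 s)%R.
Proof.
move=> hP hF; rewrite big_seq_cond [RHS]big_seq_cond; apply: eq_big => s.
  by rewrite mem_partitions; case hp: (is_partition n s) => //=; apply: hP.
by case/andP => hm hp; apply: hF => //; rewrite -mem_partitions.
Qed.

Lemma mem_le_sumn (s : seq nat) x : x \in s -> x <= sumn s.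
Proof.
elim: s => //= y s IH; rewrite in_cons => /orP [/eqP ->|h]; first exact: leq_addr.
by apply: leq_trans (IH h) _; exact: leq_addl.
Qed.

Lemma sorted_part n s : is_partition n s -> sorted geq s.
Proof. by case/and3P. Qed.

Lemma sumn_part n s : is_partition n s -> sumn s = n.
Proof. by case/and3P => _ _ /eqP. Qed.

Lemma mu2_rcons_in (s : seq nat) x : sorted geq s -> all (fun y => x <= y) s -> x \in s ->
  mu2 (rcons s x) = mu2 s.
Proof.
move=> hs ha hx; case: (min_last hs ha hx) => s' e.
rewrite mu2_rcons // {2}e mu2_rcons ?e ?filter_rcons ?ifF //.
- by apply/negbTE; rewrite -ltnNge.
- by move: ha; rewrite e all_rcons => /andP [].
Qed.

Lemma mu2_rcons_ge (s : seq nat) x : all (fun y => x.+2 <= y) s -> mu2 (rcons s x) = (mu2 s).+1.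
Proof.
move=> ha; rewrite mu2_rcons; last by apply/allP => y /(allP ha); lia.
by move/all_filterP: ha => ->.
Qed.

Lemma mu2_rcons_rcons (s : seq nat) x : all (fun y => x.+1 <= y) s ->
  mu2 (rcons (rcons s x.+1) x) = mu2 (rcons s x).
Proof.
move=> ha; rewrite mu2_rcons; last by rewrite all_rcons leqnSn; apply/allP => y /(allP ha); lia.
rewrite mu2_rcons; last by apply/allP => y /(allP ha); lia.
by rewrite filter_rcons ltnn.
Qed.

Lemma Ecnt_small m H n : n < H -> Ecnt m H n = 0%R.
Proof.
move=> hn; rewrite /Ecnt big_seq_cond big1 // => s /andP [hs /and3P [_ hH _]].
move: hs; rewrite mem_partitions => /sumn_part e; have := mem_le_sumn hH; lia.
Qed.

Lemma Ecnt_rec m H n : 0 < H -> H <= n ->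
  Ecnt m H n = (- Ecnt m H (n - H) + Gcnt m H (n - H))%R.
Proof.
move=> H0 Hn; rewrite /Ecnt (big_rconsP _ (fun s => sg s) H0 Hn).
rewrite (bigID (fun s => H \in s)) /=; congr (_ + _)%R.
  rewrite -sumrN; apply: eq_big_part => s hs.
    case ha: (all _ s); case hH: (H \in s) => //=; last by rewrite andbF.
    by rewrite andbT (mu2_rcons_in (sorted_part hs) ha hH).
  move=> /andP [/andP [ha _] hH].
  by rewrite /sg size_rcons (mu2_rcons_in (sorted_part hs) ha hH) addSn exprS mulN1r.
rewrite /Gcnt; apply: eq_big_part => s hs.
  by rewrite -all_geS; case: (all _ _) (H \in s) (_ == m) => [] [] [].
by [].
Qed.

Lemma Gcnt_rec m H n : 0 < H ->
  Gcnt m.+1 H n = (- (if (H.+1 <= n)%N then Gcnt m.+1 H (n - H.+1) else 0) + cnt m H.+2 n)%R.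
Proof.
move=> H0; rewrite /Gcnt (bigID (fun s => H.+1 \in s)) /=; congr (_ + _)%R.
  case: (leqP H.+1 n) => hn; last first.
    rewrite big_seq_cond big1 ?oppr0 // => s /andP [hs /andP [_ hH]].
    move: hs; rewrite mem_partitions => /sumn_part e; have := mem_le_sumn hH; lia.
  have -> : (\sum_(i <- partitions n | all (fun y => H.+1 <= y)%N i && (mu2 (rcons i H) == m.+1) &&
               (H.+1 \in i)) sg (rcons i H) =
            \sum_(i <- partitions n | [&& all (fun y => H.+1 <= y)%N i, H.+1 \in i &
               (mu2 (rcons i H) == m.+1)]) sg (rcons i H))%R.
    by apply: eq_bigl => s; case: (all _ _) (H.+1 \in s) (_ == _) => [] [] [].
  rewrite (big_rconsP _ (fun s => sg (rcons s H)) (ltn0Sn H) hn) -sumrN.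
  apply: eq_big_part => s hs.
    case ea: (all _ s) => //=.
    by rewrite mu2_rcons_rcons.
  move=> /andP [ha _].
  by rewrite /sg !size_rcons mu2_rcons_rcons // addSn exprS mulN1r.
rewrite /cnt; apply: eq_big_part => s hs.
  rewrite -[in RHS]all_geS; case ea: (all _ s); case eH: (H.+1 \in s) => /=; rewrite ?andbF ?andbT //.
  by rewrite mu2_rcons_ge ?eqSS // -all_geS ea eH.
move=> /andP [/andP [ha _] hH].
have ha2 : all (fun y => H.+2 <= y) s by rewrite -all_geS ha hH.
by rewrite /sg size_rcons mu2_rcons_ge // addSn addnS exprS exprS mulN1r mulN1r opprK.
Qed.
Open Scope ring_scope.

Record fps := FPS { coef : nat -> int }.
HB.instance Definition _ := boolp.gen_eqMixin fps.
HB.instance Definition _ := boolp.gen_choiceMixin fps.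

Lemma fpsP (f g : fps) : (forall n, coef f n = coef g n) -> f = g.
Proof. case: f => f; case: g => g /= H; congr FPS; apply: boolp.funext => n; exact: H. Qed.

Definition fzero := FPS (fun _ => 0).
Definition fadd f g := FPS (fun n => coef f n + coef g n).
Definition fopp f := FPS (fun n => - coef f n).

Lemma faddA : associative fadd.
Proof. by move=> f g h; apply: fpsP => n /=; rewrite addrA. Qed.
Lemma faddC : commutative fadd.
Proof. by move=> f g; apply: fpsP => n /=; rewrite addrC. Qed.
Lemma fadd0 : left_id fzero fadd.
Proof. by move=> f; apply: fpsP => n /=; rewrite add0r. Qed.
Lemma faddN : left_inverse fzero fopp fadd.
Proof. by move=> f; apply: fpsP => n /=; rewrite addNr. Qed.

HB.instance Definition _ := GRing.isZmodule.Build fps faddA faddC fadd0 faddN.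

Definition tr (n : nat) (f : fps) : {poly int} := \poly_(i < n.+1) coef f i.

Definition fmul f g := FPS (fun n => (tr n f * tr n g)`_n).
Definition fone := FPS (fun n => (n == 0%N)%:R).

Lemma coef_tr n f i : (i <= n)%N -> (tr n f)`_i = coef f i.
Proof. by move=> hi; rewrite /tr coef_poly ltnS hi. Qed.

Lemma coefM_dep (p p' q q' : {poly int}) n :
  (forall i, (i <= n)%N -> p`_i = p'`_i) -> (forall i, (i <= n)%N -> q`_i = q'`_i) ->
  (p * q)`_n = (p' * q')`_n.
Proof.
move=> hp hq; rewrite !coefM; apply: eq_bigr => [[i hi]] _ /=.
by rewrite hp // hq ?leq_subr // -ltnS.
Qed.

Lemma coef_fmul f g n : coef (fmul f g) n = \sum_(i < n.+1) coef f i * coef g (n - i).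
Proof.
rewrite /= coefM; apply: eq_bigr => [[i hi]] _ /=.
by rewrite !coef_tr ?leq_subr // -ltnS.
Qed.

Lemma tr_fmul n m f g : (m <= n)%N -> coef (fmul f g) m = (tr n f * tr n g)`_m.
Proof.
move=> hm /=; apply: coefM_dep => i hi; rewrite !coef_tr //; exact: leq_trans hi hm.
Qed.

Lemma fmulA : associative fmul.
Proof.
move=> f g h; apply: fpsP => n; rewrite [LHS]/= [RHS]/=.
have e1 : forall i, (i <= n)%N -> (tr n (fmul g h))`_i = (tr n g * tr n h)`_i.
  by move=> i hi; rewrite coef_tr // (tr_fmul g h hi).
have e2 : forall i, (i <= n)%N -> (tr n (fmul f g))`_i = (tr n f * tr n g)`_i.
  by move=> i hi; rewrite coef_tr // (tr_fmul f g hi).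
rewrite (@coefM_dep _ (tr n f) _ _ _ (fun i _ => erefl) e1).
rewrite (@coefM_dep _ _ _ (tr n h) _ e2 (fun i _ => erefl)).
by rewrite mulrA.
Qed.

Lemma fmulC : commutative fmul.
Proof. by move=> f g; apply: fpsP => n /=; rewrite mulrC. Qed.

Lemma fmul1 : left_id fone fmul.
Proof.
move=> f; apply: fpsP => n; rewrite coef_fmul big_ord_recl /= mul1r subn0.
by rewrite big1 ?addr0 // => i _; rewrite mul0r.
Qed.

Lemma fmulDl : left_distributive fmul fadd.
Proof.
move=> f g h; apply: fpsP => n.
transitivity (coef (fmul f h) n + coef (fmul g h) n); last by [].
rewrite !coef_fmul -big_split /=.
by apply: eq_bigr => i _; rewrite mulrDl.
Qed.

HB.instance Definition _ := GRing.Zmodule_isComPzRing.Build fps fmulA fmulC fmul1 fmulDl.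

Lemma fcoefD (f g : fps) n : coef (f + g) n = coef f n + coef g n. Proof. by []. Qed.
Lemma fcoefN (f : fps) n : coef (- f) n = - coef f n. Proof. by []. Qed.
Lemma fcoefB (f g : fps) n : coef (f - g) n = coef f n - coef g n. Proof. by []. Qed.
Lemma fcoef1 n : coef 1 n = (n == 0%N)%:R. Proof. by []. Qed.
Lemma fcoefM (f g : fps) n : coef (f * g) n = \sum_(i < n.+1) coef f i * coef g (n - i).
Proof. exact: coef_fmul. Qed.



Definition q := FPS (fun n => (n == 1%N)%:R).

Lemma coef_qM g n : coef (q * g) n = if (0 < n)%N then coef g n.-1 else 0.
Proof.
rewrite fcoefM; case: n => [|n].
  by rewrite big_ord_recl big_ord0 /= mul0r addr0.
rewrite big_ord_recl /= mul0r add0r big_ord_recl /= mul1r subSS subn0.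
by rewrite big1 ?addr0 // => i _; rewrite /= mul0r.
Qed.

Lemma coef_qXM k g n : coef (q ^+ k * g) n = if (k <= n)%N then coef g (n - k) else 0.
Proof.
elim: k n => [|k IH] n; first by rewrite expr0 mul1r subn0.
rewrite exprS -mulrA coef_qM; case: n => [|n]; first by []. 
rewrite [n.+1.-1]/= IH subSS; by [].
Qed.

Lemma coef_qX k n : coef (q ^+ k) n = (n == k)%:R.
Proof.
rewrite -[q ^+ k]mulr1 coef_qXM fcoef1.
case: (leqP k n) => h; first by rewrite subn_eq0 eqn_leq h andbT.
by case: eqP => // e; move: h; rewrite e ltnn.
Qed.

Definition gp k := FPS (fun n => (k %| n)%N%:R).
Definition alt k := FPS (fun n => if (k %| n)%N then (-1) ^+ (n %/ k)%N else 0).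

Lemma gpqP k : (0 < k)%N -> (1 - q ^+ k) * gp k = 1.
Proof.
move=> k0; apply: fpsP => n; rewrite mulrBl mul1r fcoefB coef_qXM fcoef1 /=.
case: n => [|n]; first by rewrite dvdn0 leqNgt k0 subr0.
case: (leqP k n.+1) => h.
  by rewrite dvdn_subl // subrr.
rewrite subr0; case: (boolP (k %| n.+1)%N) => // d.
by move: h; rewrite ltnNge (dvdn_leq _ d).
Qed.

Lemma altqP k : (0 < k)%N -> (1 + q ^+ k) * alt k = 1.
Proof.
move=> k0; apply: fpsP => n; rewrite mulrDl mul1r fcoefD coef_qXM fcoef1 /=.
case: n => [|n]; first by rewrite dvdn0 div0n leqNgt k0 addr0.
case: (leqP k n.+1) => h.
  rewrite dvdn_subl //; case: ifP => d; last by rewrite addr0.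
  rewrite divnBr // divnn k0.
  have: (0 < (n.+1 %/ k))%N by rewrite divn_gt0.
  by case: (n.+1 %/ k)%N => [|j] // _; rewrite subSS subn0 exprS mulN1r addNr.
rewrite addr0; case: (boolP (k %| n.+1)%N) => // d.
by move: h; rewrite ltnNge (dvdn_leq _ d).
Qed.

Close Scope ring_scope.

Lemma mu2_nil : mu2 [::] = 0.
Proof. by apply/eqP; rewrite -leqn0; apply: mu2_lub => t; rewrite subseq0 => /eqP ->. Qed.

Lemma mu2_pos (s : seq nat) : s != [::] -> 0 < mu2 s.
Proof.
case: s => // x s _; apply: (@leq_trans (size [:: x])) => //.
by apply: mu2_ub => //; rewrite sub1seq mem_head.
Qed.

Lemma cnt0 H n : cnt 0 H n = ((n == 0)%:R)%R.
Proof.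
case: n => [|n].
  by rewrite /cnt /partitions /= big_cons big_nil /= mu2_nil /= /sg mu2_nil addr0.
rewrite /cnt big_seq_cond big1 // => s /andP [hs /andP [_ /eqP h]].
have : s != [::].
  by apply/eqP => e; move: hs; rewrite e mem_partitions /is_partition /=.
by move/mu2_pos; rewrite h.
Qed.

Lemma cnt_small m H n : n < H -> cnt m.+1 H n = 0%R.
Proof.
move=> hn; rewrite /cnt big_seq_cond big1 // => s /andP [hs /andP [ha /eqP hm]].
move: hs; rewrite mem_partitions => /sumn_part e.
case: s ha hm e => [|x s]; first by rewrite mu2_nil.
by move=> /= /andP [hx _] _ /= e; exfalso; lia.
Qed.

Open Scope ring_scope.

Definition cS m H := FPS (cnt m H).
Definition ES m H := FPS (Ecnt m H).
Definition GS m H := FPS (Gcnt m H).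

Lemma coef_1pq k f n :
  coef ((1 + q ^+ k) * f) n = coef f n + (if (k <= n)%N then coef f (n - k) else 0).
Proof. by rewrite mulrDl mul1r fcoefD coef_qXM. Qed.

Lemma ES_eq m H : (0 < H)%N -> (1 + q ^+ H) * ES m H = q ^+ H * GS m H.
Proof.
move=> H0; apply: fpsP => n; rewrite coef_1pq coef_qXM /=.
case: (leqP H n) => hn.
  by rewrite (Ecnt_rec _ H0 hn) addrC addrA addrN add0r.
by rewrite Ecnt_small // addr0.
Qed.

Lemma GS_eq m H : (0 < H)%N -> (1 + q ^+ H.+1) * GS m.+1 H = cS m H.+2.
Proof.
move=> H0; apply: fpsP => n; rewrite coef_1pq /= (Gcnt_rec _ _ H0).
by case: ifP => _; [rewrite addrC addrA addrN add0r | rewrite oppr0 add0r addr0].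
Qed.

Lemma cS_split m H : cS m H = cS m H.+1 + ES m H.
Proof. by apply: fpsP => n; rewrite fcoefD /= cnt_split. Qed.

Lemma cS_rec m H : (0 < H)%N ->
  cS m.+1 H = cS m.+1 H.+1 + q ^+ H * alt H * alt H.+1 * cS m H.+2.
Proof.
move=> H0; rewrite cS_split; congr (_ + _).
have e1 : ES m.+1 H = alt H * (q ^+ H * GS m.+1 H).
  by rewrite -ES_eq // mulrA [alt H * _]mulrC altqP // mul1r.
have e2 : GS m.+1 H = alt H.+1 * cS m H.+2.
  by rewrite -GS_eq // mulrA [alt H.+1 * _]mulrC altqP // mul1r.
by rewrite e1 e2; ring.
Qed.

Close Scope ring_scope.
Open Scope ring_scope.

Lemma closed_form_ind (c Z : nat -> nat -> fps) (R : nat -> fps) :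
  (forall H, (0 < H)%N -> c 0%N H = Z 0%N H) ->
  (forall m H n, (0 < H)%N -> (n < H)%N -> coef (c m.+1 H) n = 0) ->
  (forall m H n, (0 < H)%N -> (n < H)%N -> coef (Z m.+1 H) n = 0) ->
  (forall m H, (0 < H)%N -> c m.+1 H = c m.+1 H.+1 + q ^+ H * R H * c m H.+2) ->
  (forall m H, (0 < H)%N -> Z m.+1 H = Z m.+1 H.+1 + q ^+ H * R H * Z m H.+2) ->
  forall n m H, (0 < H)%N -> coef (c m H) n = coef (Z m H) n.
Proof.
move=> h0 hc hZ rc rZ n; elim: n {-2}n (leqnn n) => [|N IHN] n hn m H H0.
  case: m => [|m]; first by rewrite h0.
  rewrite leqn0 in hn; rewrite (eqP hn) hc ?hZ //.
have IH : forall n', (n' < n)%N -> forall m H, (0 < H)%N -> coef (c m H) n' = coef (Z m H) n'.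
  by move=> n' hn'; apply: IHN; lia.
case: m => [|m]; first by rewrite h0.
suff : forall k H, (0 < H)%N -> (n < H + k)%N -> coef (c m.+1 H) n = coef (Z m.+1 H) n.
  by move/(_ n.+1 H H0); apply; lia.
elim=> [|k IHk] {}H {}H0 hk.
  by rewrite hc ?hZ //; lia.
case: (ltnP n H) => hnH; first by rewrite hc ?hZ.
rewrite rc // rZ // !fcoefD (IHk H.+1) //; last by lia.
congr (_ + _); rewrite -!mulrA !coef_qXM hnH !fcoefM; apply: eq_bigr => i _.
by rewrite IH //; lia.
Qed.

Definition Gp m := \prod_(1 <= j < m.+1) gp j.
Definition Alt a k := \prod_(0 <= j < k) alt (a + j).
Definition X m H := q ^+ (m * H + m * (m - 1)) * (Gp m * Alt H m).
Definition Gp2 m := \prod_(1 <= j < m.+1) gp (2 * j).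
Definition Y m H := q ^+ (m * (H + ~~ odd H) + m * (m - 1)) * Gp2 m.

Lemma GpS m : Gp m.+1 = Gp m * gp m.+1.
Proof. by rewrite /Gp big_nat_recr. Qed.
Lemma Gp2S m : Gp2 m.+1 = Gp2 m * gp (2 * m.+1).
Proof. by rewrite /Gp2 big_nat_recr. Qed.
Lemma AltSl a k : Alt a k.+1 = alt a * Alt a.+1 k.
Proof.
rewrite /Alt big_nat_recl // addn0; congr (_ * _); apply: eq_bigr => j _.
by rewrite addSnnS.
Qed.
Lemma AltSr a k : Alt a k.+1 = Alt a k * alt (a + k).
Proof. by rewrite /Alt big_nat_recr. Qed.

Lemma coef_small e W n : (n < e)%N -> coef (q ^+ e * W) n = 0.
Proof. by move=> h; rewrite coef_qXM leqNgt h. Qed.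

Lemma X_small m H n : (n < H)%N -> coef (X m.+1 H) n = 0.
Proof. by move=> h; rewrite coef_small //; apply: leq_trans h _; nia. Qed.

Lemma Y_small m H n : (n < H)%N -> coef (Y m.+1 H) n = 0.
Proof. by move=> h; rewrite coef_small //; apply: leq_trans h _; nia. Qed.

Lemma X_rec m H : (0 < H)%N ->
  X m.+1 H = X m.+1 H.+1 + q ^+ H * (alt H * alt H.+1) * X m H.+2.
Proof.
move=> H0; rewrite /X GpS (AltSl H) (AltSr H.+1).
have hA : alt H.+1 * Alt H.+2 m = Alt H.+1 m * alt (H.+1 + m) by rewrite -AltSl AltSr.
have e1 : (m.+1 * H.+1 + m.+1 * (m.+1 - 1) = (m.+1 * H + m.+1 * (m.+1 - 1)) + m.+1)%N by nia.
have e2 : (m.+1 * H + m.+1 * (m.+1 - 1) = H + (m * H.+2 + m * (m - 1)))%N.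
  by clear; case: m => [|m]; rewrite ?muln0 ?subn0 /=; nia.
rewrite e1 e2 (exprD q (H + _) m.+1) !(exprD q H).
set x := q ^+ H; set y := q ^+ m.+1; set Q := q ^+ (m * H.+2 + m * (m - 1)).
set g := gp m.+1; set a := alt H; set b := alt (H.+1 + m); set G := Gp m.
set A := Alt H.+1 m; set c := alt H.+1; set A2 := Alt H.+2 m.
have hg : (1 - y) * g = 1 by rewrite gpqP.
have ha : (1 + x) * a = 1 by rewrite altqP.
have hb : (1 + x * y) * b = 1.
  by rewrite /x /y /b -exprD addnS -addSn altqP.
have -> : x * (a * c) * (Q * (G * A2)) = x * a * Q * G * (c * A2) by ring.
rewrite hA -/A -/b.
have key : g * a - y * (g * b) - a * b = 0.
  transitivity (g * a * ((1 + x * y) * b) - y * (g * b * ((1 + x) * a)) - a * b * ((1 - y) * g)).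
    by rewrite hb ha hg !mulr1.
  ring.
apply/eqP; rewrite -subr_eq0; apply/eqP.
transitivity (x * Q * G * A * (g * a - y * (g * b) - a * b)); first ring.
by rewrite key mulr0.
Qed.

Lemma Y_rec m H : (0 < H)%N ->
  Y m.+1 H = Y m.+1 H.+1 + q ^+ H * (if odd H then 1 else 0) * Y m H.+2.
Proof.
move=> H0; rewrite /Y.
case: (boolP (odd H)) => hH; last first.
  rewrite mulr0 mul0r addr0 /= hH /=; congr (q ^+ _ * _); lia.
rewrite mulr1 /= hH /= Gp2S.
have e1 : (m.+1 * (H.+1 + true) + m.+1 * (m.+1 - 1) = (m.+1 * (H + false) + m.+1 * (m.+1 - 1)) + 2 * m.+1)%N by nia.
have e2 : (m.+1 * (H + false) + m.+1 * (m.+1 - 1) = H + (m * (H.+2 + 0) + m * (m - 1)))%N.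
  by clear; case: m => [|m]; rewrite ?muln0 ?subn0 /=; nia.
rewrite e1 e2 (exprD q (H + _) (2 * m.+1)) !(exprD q H).
set x := q ^+ H; set y := q ^+ (2 * m.+1); set Q := q ^+ (m * (H.+2 + 0) + m * (m - 1)).
set g := gp (2 * m.+1); set G := Gp2 m.
have hg : (1 - y) * g = 1 by rewrite gpqP.
apply/eqP; rewrite -subr_eq0; apply/eqP.
transitivity (x * Q * G * (g - y * g - 1)); first ring.
have -> : g - y * g - 1 = (1 - y) * g - 1 by ring.
by rewrite hg subrr mulr0.
Qed.

Lemma gp_alt j : (0 < j)%N -> gp j * alt j = gp (2 * j).
Proof.
move=> j0.
have h1 : (1 - q ^+ (2 * j)) * (gp j * alt j) = 1.
  have -> : 1 - q ^+ (2 * j) = (1 - q ^+ j) * (1 + q ^+ j) by rewrite mulnC exprM; ring.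
  transitivity (((1 - q ^+ j) * gp j) * ((1 + q ^+ j) * alt j)); first ring.
  by rewrite gpqP // altqP // mulr1.
have h2 : (1 - q ^+ (2 * j)) * gp (2 * j) = 1 by rewrite gpqP // muln_gt0.
transitivity ((gp j * alt j) * ((1 - q ^+ (2 * j)) * gp (2 * j))); first by rewrite h2 mulr1.
by rewrite mulrA [_ * (1 - _)]mulrC h1 mul1r.
Qed.

Lemma XY1 m : X m 1 = Y m 1.
Proof.
rewrite /X /Y /= addn0 muln1; congr (_ * _).
rewrite /Gp /Gp2 /Alt.
have -> : \prod_(0 <= j < m) alt (1 + j) = \prod_(1 <= j < m.+1) alt j.
  by rewrite big_add1 /=; apply: eq_bigr => j _; rewrite add1n.
rewrite -big_split /=; rewrite !big_nat; apply: eq_bigr => j /andP [hj _].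
exact: gp_alt.
Qed.

Close Scope ring_scope.

Lemma cnt_closed n m H : 0 < H -> cnt m H n = coef (X m H) n.
Proof.
move=> H0; transitivity (coef (cS m H) n); first by [].
have := @closed_form_ind cS X (fun H => alt H * alt H.+1)%R.
move=> /(_ _ _ _ _ _ n m H H0) -> //.
- move=> h _; have -> : X 0 h = 1%R by rewrite /X /Gp /Alt !big_geq // mul0n addn0 expr0 !mulr1.
  by apply: fpsP => k; rewrite fcoef1; exact: cnt0.
- by move=> m' h k _ hk; exact: cnt_small.
- by move=> m' h k _ hk; rewrite X_small.
- by move=> m' h h0; rewrite cS_rec // !mulrA.
- by move=> m' h h0; rewrite X_rec.
Qed.

Definition dcnt m H n : int :=
  (\sum_(s <- partitions n | [&& all (fun y => H <= y)%N s, uniq s, all odd s & size s == m]) 1)%R.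

Lemma dcnt0 H n : dcnt 0 H n = ((n == 0)%:R)%R.
Proof.
case: n => [|n].
  by rewrite /dcnt /partitions /= big_cons big_nil /= addr0.
rewrite /dcnt big_seq_cond big1 // => s /andP [hs /and4P [_ _ _ /eqP h]].
by move: hs; move/size0nil: h => ->; rewrite mem_partitions /is_partition /=.
Qed.

Lemma dcnt_small m H n : n < H -> dcnt m.+1 H n = 0%R.
Proof.
move=> hn; rewrite /dcnt big_seq_cond big1 // => s /andP [hs /and4P [ha _ _ /eqP hm]].
move: hs; rewrite mem_partitions => /sumn_part e.
case: s ha hm e => [|x s] //.
by move=> /= /andP [hx _] _ /= e; exfalso; lia.
Qed.

Lemma dcnt_rec m H n : 0 < H ->
  dcnt m.+1 H n = (dcnt m.+1 H.+1 n + (if odd H && (H <= n)%N then dcnt m H.+2 (n - H) else 0))%R.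
Proof.
move=> H0; rewrite /dcnt (bigID (fun s => H \in s)) /= addrC; congr (_ + _)%R.
  apply: eq_bigl => s; rewrite -all_geS.
  by case: (all _ _) (H \in s) (uniq s) (all odd s) (size s == m.+1) => [] [] [] [] [].
case: (boolP (odd H)) => hH /=; last first.
  rewrite big_seq_cond big1 // => s /andP [_ /andP [/and4P [_ _ ho _] hin]].
  by move/allP: ho => /(_ H hin); rewrite (negbTE hH).
case: (leqP H n) => hn; last first.
  rewrite big_seq_cond big1 // => s /andP [hs /andP [_ hin]].
  move: hs; rewrite mem_partitions => /sumn_part e; have := mem_le_sumn hin; lia.
have -> : (\sum_(s <- partitions n | [&& all (fun y => H <= y)%N s, uniq s, all odd s & size s == m.+1] &&
            (H \in s)) (1 : int) =
          \sum_(s <- partitions n | [&& all (fun y => H <= y)%N s, H \in s &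
            [&& uniq s, all odd s & size s == m.+1]]) (1 : int))%R.
  by apply: eq_bigl => s; case: (all _ _) (H \in s) (uniq s) (all odd s) (size s == m.+1) => [] [] [] [] [].
rewrite (big_rconsP _ (fun _ => (1 : int)) H0 hn); apply: eq_big_part => s hs //.
rewrite rcons_uniq all_rcons size_rcons eqSS hH /=.
rewrite -(all_geS H.+1) -(all_geS H).
case ea: (all _ s); case eH: (H \in s); case eH1: (H.+1 \in s); case eo: (all odd s) => //=;
  rewrite ?andbF ?andbT //.
by move/allP: eo => /(_ _ eH1) /=; rewrite hH.
Qed.

Definition dS m H := FPS (dcnt m H).

Lemma dS_rec m H : 0 < H ->
  dS m.+1 H = (dS m.+1 H.+1 + q ^+ H * (if odd H then 1 else 0) * dS m H.+2)%R.
Proof.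
move=> H0; apply: fpsP => n; rewrite fcoefD -mulrA coef_qXM.
transitivity (dcnt m.+1 H n); first by [].
rewrite (dcnt_rec _ _ H0); congr (_ + _)%R.
by case: (odd H); case: (leqP H n) => h; rewrite ?andTb ?andFb ?andbT ?andbF ?mul1r ?mul0r.
Qed.

Lemma dcnt_closed n m H : 0 < H -> dcnt m H n = coef (Y m H) n.
Proof.
move=> H0; transitivity (coef (dS m H) n); first by [].
have := @closed_form_ind dS Y (fun H => if odd H then 1 else 0)%R.
move=> /(_ _ _ _ _ _ n m H H0) -> //.
- move=> h _; have -> : Y 0 h = 1%R by rewrite /Y /Gp2 !big_geq // mul0n addn0 expr0 !mulr1.
  by apply: fpsP => k; rewrite fcoef1; exact: dcnt0.
- by move=> m' h k _ hk; exact: dcnt_small.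
- by move=> m' h k _ hk; rewrite Y_small.
- by move=> m' h h0; rewrite dS_rec.
- by move=> m' h h0; rewrite Y_rec.
Qed.

Lemma cnt_dcnt n m : cnt m 1 n = dcnt m 1 n.
Proof. by rewrite cnt_closed // dcnt_closed // XY1. Qed.

Lemma signed_count (l : seq (seq nat)) :
  (Posz (count (fun s => ~~ odd (ell s + mu2 s)) l) - Posz (count (fun s => odd (ell s + mu2 s)) l))%R
  = (\sum_(s <- l) sg s)%R.
Proof.
elim: l => [|x l IH]; first by rewrite big_nil.
rewrite big_cons /= -IH /sg /ell -signr_odd !PoszD.
by case: (odd (size x + mu2 x)) => /=; rewrite ?expr0 ?expr1; ring.
Qed.

Lemma count_sum (l : seq (seq nat)) (P : pred (seq nat)) :
  Posz (count P l) = (\sum_(s <- l | P s) 1)%R.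
Proof.
elim: l => [|x l IH]; first by rewrite big_nil.
by rewrite big_cons /= PoszD IH; case: (P x) => //=; rewrite add0r.
Qed.

Lemma sum_by (l : seq (seq nat)) (Q : pred (seq nat)) (f : seq nat -> nat) (F : seq nat -> int) N :
  (forall s, s \in l -> Q s -> f s < N) ->
  (\sum_(s <- l | Q s) F s = \sum_(m < N) \sum_(s <- l | Q s && (f s == m)) F s)%R.
Proof.
elim: l => [|x l IH] h.
  by rewrite big_nil big1 // => m _; rewrite big_nil.
rewrite big_cons.
have -> : (\sum_(m < N) \sum_(s <- x :: l | Q s && (f s == m)) F s =
           \sum_(m < N) ((if Q x && (f x == m) then F x else 0) +
                         \sum_(s <- l | Q s && (f s == m)) F s))%R.
  by apply: eq_bigr => m _; rewrite big_cons; case: ifP => _; rewrite ?add0r.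
rewrite big_split /= -IH; last by move=> s hs; apply: h; rewrite in_cons hs orbT.
case hQ: (Q x) => /=; last by rewrite big1_eq add0r.
congr (_ + _)%R.
have hx : f x < N by apply: h => //; exact: mem_head.
rewrite (bigD1 (Ordinal hx)) //= eqxx big1 ?addr0 // => m hm.
case: eqP => // e; case/eqP: hm; apply: val_inj; by rewrite /= e.
Qed.

Lemma size_part n s : is_partition n s -> size s <= n.
Proof.
case/and3P => _ hpos /eqP <-.
elim: s hpos => //= x s IH /andP [hx hs]; have := IH hs; lia.
Qed.

Lemma mu2_size (s : seq nat) : mu2 s <= size s.
Proof. by apply: mu2_lub => t ht _; exact: size_subseq. Qed.

Theorem corollary1p6 (n : nat) :
  (Posz (count (fun s => ~~ odd (ell s + mu2 s)) (partitions n))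
   - Posz (count (fun s => odd (ell s + mu2 s)) (partitions n)))%R
  = Posz (count (fun s => uniq s && all odd s) (partitions n)).
Proof.
rewrite signed_count count_sum.
rewrite (@sum_by _ xpredT mu2 _ n.+1); last first.
  move=> s; rewrite mem_partitions => hs _; rewrite ltnS.
  exact: leq_trans (mu2_size s) (size_part hs).
rewrite (@sum_by _ _ size _ n.+1); last first.
  by move=> s; rewrite mem_partitions => hs _; rewrite ltnS; exact: size_part hs.
apply: eq_bigr => m _.
transitivity (cnt m 1 n).
  apply: eq_big_part => s hs //=.
  by case/and3P: hs => _ -> _.
rewrite cnt_dcnt; apply: eq_big_part => s hs //=.
case/and3P: hs => _ hp _; rewrite hp /=.
by case: (uniq s) (all odd s) (size s == m) => [] [] [].
Qed.
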